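(* Let $W_N$ be the Weyl algebra generated by the entries of $N\times N$ matrices $X=\|x_i^j\|$ and $D=\|\partial/\partial x_j^i\|$, which satisfy $X_1X_2=X_2X_1$, $D_1D_2=D_2D_1$, $D_1X_2=X_2D_1+P_{12}$, and let $L=XD$. Then for every integer $n\ge 1$, in $Mat_{N\times N}(\mathbb{C})^{\otimes n}\otimes W_N$, $$L_1(L_2-j_2)\cdots(L_n-j_n)=X_1\cdots X_n\,D_1\cdots D_n,$$ where $j_k=\sum_{i=1}^{k-1}P_{ik}$.
   Context: For a matrix $A$ with entries in an algebra, $A_i=\mathbb{E}\otimes\cdots\otimes A\otimes\cdots\otimes\mathbb{E}$ with $A$ in the $i$-th tensor factor and the identity matrix $\mathbb{E}$ elsewhere. $P_{ik}$ denotes the permutation matrix acting in tensor factors $i$ and $k$, with $P_{kl}^{mn}=\delta_k^n\delta_l^m$. The elements $j_k$ are the images of the Jucys–Murphy elements of $\mathbb{C}[S_n]$. The map sending the generators of $U(\mathbf{gl}_N)$ to the entries of $XD$ embeds $U(\mathbf{gl}_N)$ into $W_N$. *)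

(* Defs.v *)
From HB Require Import structures.
From mathcomp Require Import all_boot all_order all_algebra.
Set Implicit Arguments. Unset Strict Implicit. Unset Printing Implicit Defensive.
Import GRing.Theory.
Local Open Scope ring_scope.

(* Elements of Mat_{NxN}^{(x) n} (x) A are represented as "matrices" whose
   rows/columns are indexed by multi-indices a : {ffun 'I_n -> 'I_N}
   (a k = index in the k-th tensor factor, factors numbered 0..n-1),
   with entries in the algebra A. *)
Notation idx N n := {ffun 'I_n -> 'I_N}.
Definition op (A : pzRingType) (N n : nat) := idx N n -> idx N n -> A.

Definition opmul (A : pzRingType) (N n : nat) (F G : op A N n) : op A N n :=
  fun a b => \sum_(c : idx N n) F a c * G c b.

Definition opone (A : pzRingType) (N n : nat) : op A N n :=
  fun a b => (a == b)%:R.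

Definition opsub (A : pzRingType) (N n : nat) (F G : op A N n) : op A N n :=
  fun a b => F a b - G a b.

Definition opprod (A : pzRingType) (N n : nat) (s : seq 'I_n)
  (F : 'I_n -> op A N n) : op A N n :=
  foldr (fun k acc => opmul (F k) acc) (@opone A N n) s.

(* M_i = E (x) ... (x) M (x) ... (x) E, M in the i-th factor *)
Definition emb (A : pzRingType) (N n : nat) (i : 'I_n) (M : 'I_N -> 'I_N -> A)
  : op A N n :=
  fun a b => M (a i) (b i) * (\prod_(k < n | k != i) (a k == b k))%:R.

Definition permop (A : pzRingType) (N n : nat) (i k : 'I_n) : op A N n :=
  fun a b => [&& a i == b k, a k == b i &
               [forall l : 'I_n, (l != i) && (l != k) ==> (a l == b l)]]%:R.

Definition jmat (A : pzRingType) (N n : nat) (k : 'I_n) : op A N n :=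
  fun a b => \sum_(i < n | (i < k)%N) @permop A N n i k a b.

Definition Lmat (A : pzRingType) (N : nat) (X D : 'I_N -> 'I_N -> A) :
  'I_N -> 'I_N -> A :=
  fun r c => \sum_(m < N) X r m * D m c.

(* Defining relations of the Weyl algebra W_N, written entrywise:
   X_1 X_2 = X_2 X_1,  D_1 D_2 = D_2 D_1,  D_1 X_2 = X_2 D_1 + P_12
   in Mat^{(x)2} (x) A; entry ((a1,a2),(b1,b2)) of D_1 X_2 is
   D a1 b1 * X a2 b2, of P_12 is delta(a1,b2) delta(a2,b1). *)
Definition weyl_rel (A : pzRingType) (N : nat) (X D : 'I_N -> 'I_N -> A) : Prop :=
  [/\ (forall a1 b1 a2 b2, X a1 b1 * X a2 b2 = X a2 b2 * X a1 b1),
      (forall a1 b1 a2 b2, D a1 b1 * D a2 b2 = D a2 b2 * D a1 b1) &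
      (forall a1 b1 a2 b2,
         D a1 b1 * X a2 b2 = X a2 b2 * D a1 b1 + ((a1 == b2) && (a2 == b1))%:R)].

(* Main.v *)
Require Import Defs.
From HB Require Import structures.
From mathcomp Require Import all_boot all_order all_algebra.
From Stdlib Require Import FunctionalExtensionality.
Import GRing.Theory.
Local Open Scope ring_scope.
Set Implicit Arguments. Unset Strict Implicit.

Section Transfer.
Variables (A : pzRingType) (N n : nat).
Local Notation I := {ffun 'I_n -> 'I_N}.
Local Notation K := #|{ffun 'I_n -> 'I_N}|.
Local Notation OP := (op A N n).

Definition Phi (F : OP) : 'M[A]_K := \matrix_(i, j) F (enum_val i) (enum_val j).

Lemma PhiE (F : OP) a b : F a b = Phi F (enum_rank a) (enum_rank b).
Proof. by rewrite mxE !enum_rankK. Qed.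

Lemma Phi_mul (F G : OP) : Phi (opmul F G) = Phi F * Phi G.
Proof.
apply/matrixP=> i j; rewrite -mulmxE !mxE /opmul.
rewrite (reindex (@enum_val _ (mem I))) /=; last first.
  by exists enum_rank => x _; [rewrite enum_valK | rewrite enum_rankK].
by apply: eq_bigr => k _; rewrite !mxE.
Qed.

Lemma Phi_one : Phi (@opone A N n) = 1.
Proof.
apply/matrixP=> i j; rewrite !mxE /opone.
by rewrite (inj_eq enum_val_inj).
Qed.

Lemma Phi_sub (F G : OP) : Phi (opsub F G) = Phi F - Phi G.
Proof. by apply/matrixP=> i j; rewrite !mxE. Qed.

Lemma Phi_prod (s : seq 'I_n) (F : 'I_n -> OP) :
  Phi (opprod s F) = \prod_(k <- s) Phi (F k).
Proof.
elim: s => [|k s IH]; first by rewrite big_nil Phi_one.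
by rewrite big_cons /= Phi_mul IH.
Qed.

Lemma Phi_jmat (k : 'I_n) :
  Phi (@jmat A N n k) = \sum_(i < n | (i < k)%N) Phi (@permop A N n i k).
Proof.
apply/matrixP=> x y; rewrite !mxE /jmat summxE.
by apply: eq_bigr => i _; rewrite mxE.
Qed.
End Transfer.
Section Entries.
Variables (A : pzRingType) (N n : nat).
Local Notation I := {ffun 'I_n -> 'I_N}.
Local Notation OP := (op A N n).

Lemma b2R (b : bool) : (b%:R : A) = if b then 1 else 0.
Proof. by case: b. Qed.

Lemma prodb (P : pred 'I_n) (B : 'I_n -> bool) :
  (\prod_(k < n | P k) (B k : nat))%N = [forall k, P k ==> B k] :> nat.
Proof.
case: forallP => H.
  by rewrite big1 // => k Pk; move: (H k); rewrite Pk /= => ->.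
have [k] : exists k, ~~ (P k ==> B k).
  by apply/existsP; rewrite -negb_forall; apply/forallP.
rewrite negb_imply => /andP [Pk /negbTE Bk].
by rewrite (bigD1 k) //= Bk.
Qed.

Definition offb (k : 'I_n) (a b : I) := [forall j, (j != k) ==> (a j == b j)].
Definition off2b (k l : 'I_n) (a b : I) :=
  [forall j, (j != k) && (j != l) ==> (a j == b j)].

Lemma embE (k : 'I_n) (M : 'I_N -> 'I_N -> A) a b :
  @emb A N n k M a b = M (a k) (b k) * (offb k a b)%:R.
Proof. by rewrite /emb prodb. Qed.

Lemma sum_single (P : pred I) (F : I -> A) c0 :
  P c0 -> (forall c, P c -> c != c0 -> F c = 0) -> \sum_(c | P c) F c = F c0.
Proof.
move=> Pc0 H; rewrite (bigD1 c0) //= big1 ?addr0 // => c /andP [Pc Hc].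
exact: H.
Qed.

Definition upd (a : I) (k : 'I_n) (v : 'I_N) : I :=
  [ffun j => if j == k then v else a j].

Lemma sum_single1 (F : I -> A) c0 :
  (forall c, c != c0 -> F c = 0) -> \sum_c F c = F c0.
Proof.
move=> H; rewrite (bigD1 c0) //= big1 ?addr0 // => c Hc; exact: H.
Qed.

Lemma offbP k (a b : I) : reflect (forall j, j != k -> a j = b j) (offb k a b).
Proof.
apply: (iffP forallP) => H j; first by move=> jk; move: (H j); rewrite jk => /eqP.
by apply/implyP => jk; rewrite H.
Qed.

Lemma off2bP k l (a b : I) :
  reflect (forall j, j != k -> j != l -> a j = b j) (off2b k l a b).
Proof.
apply: (iffP forallP) => H j.
  by move=> jk jl; move: (H j); rewrite jk jl => /eqP.
by apply/implyP => /andP [jk jl]; rewrite H.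
Qed.

Lemma emb_mul_ne (k l : 'I_n) (F G : 'I_N -> 'I_N -> A) a b : k != l ->
  opmul (emb k F) (emb l G) a b =
  F (a k) (b k) * G (a l) (b l) * (off2b k l a b)%:R.
Proof.
move=> kl; rewrite /opmul (@sum_single1 _ (upd a k (b k))).
  rewrite !embE !ffunE eqxx eq_sym (negbTE kl).
  have -> : offb k a (upd a k (b k)).
    by apply/offbP => j jk; rewrite ffunE (negbTE jk).
  have -> : offb l (upd a k (b k)) b = off2b k l a b.
    apply/offbP/off2bP => H j.
      by move=> jk jl; rewrite -H // ffunE (negbTE jk).
    move=> jl; rewrite ffunE; case: eqP => [->//|/eqP jk]; exact: H.
  by rewrite mulr1 mulrA.
move=> c cc0; rewrite !embE.
case H1: (offb k a c); case H2: (offb l c b); rewrite /= ?mulr0 ?mul0r //.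
case/eqP: cc0; apply/ffunP => j; rewrite ffunE.
case: eqP => [->|/eqP jk].
  by move/offbP: H2 => ->//; rewrite eq_sym.
by move/offbP: H1 => ->.
Qed.

Lemma emb_mul_eq (k : 'I_n) (F G : 'I_N -> 'I_N -> A) a b :
  opmul (emb k F) (emb k G) a b =
  (\sum_m F (a k) m * G m (b k)) * (offb k a b)%:R.
Proof.
rewrite /opmul (partition_big (fun c : I => c k) predT) //= mulr_suml.
apply: eq_bigr => m _.
rewrite (@sum_single (fun c : I => true && (c k == m)) _ (upd a k m)).
- rewrite !embE !ffunE eqxx.
  have -> : offb k a (upd a k m).
    by apply/offbP => j jk; rewrite ffunE (negbTE jk).
  have -> : offb k (upd a k m) b = offb k a b.
    by apply/offbP/offbP => H j jk; rewrite -H // ffunE (negbTE jk).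
  by rewrite mulr1 mulrA.
- by rewrite /= ffunE eqxx.
move=> c /= /eqP ckm cc0; rewrite !embE.
case H1: (offb k a c); rewrite /= ?mulr0 ?mul0r //.
case/eqP: cc0; apply/ffunP => j; rewrite ffunE.
case: eqP => [->//|/eqP jk].
by move/offbP: H1 => ->.
Qed.

Definition sw (i m : 'I_n) (a : I) : I :=
  [ffun j => if j == i then a m else if j == m then a i else a j].

Lemma permopE (i m : 'I_n) a b :
  @permop A N n i m a b = [&& a i == b m, a m == b i & off2b i m a b]%:R.
Proof. by []. Qed.

Lemma perm_swP (i m : 'I_n) (a c : I) : i != m ->
  [&& a i == c m, a m == c i & off2b i m a c] = (c == sw i m a).
Proof.
move=> im; apply/idP/eqP.
  case/and3P => /eqP h1 /eqP h2 /off2bP h3; apply/ffunP => j; rewrite ffunE.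
  case: eqP => [->//|/eqP ji]; case: eqP => [->//|/eqP jm].
  by rewrite h3.
move=> ->; rewrite !ffunE eqxx eq_sym (negbTE im) !eqxx /=.
rewrite [m == i]eq_sym (negbTE im) eqxx /=.
by apply/off2bP => j ji jm; rewrite ffunE (negbTE ji) (negbTE jm).
Qed.

Lemma perm_swP' (i m : 'I_n) (c b : I) : i != m ->
  [&& c i == b m, c m == b i & off2b i m c b] = (c == sw i m b).
Proof.
move=> im; apply/idP/eqP.
  case/and3P => /eqP h1 /eqP h2 /off2bP h3; apply/ffunP => j; rewrite ffunE.
  case: eqP => [->//|/eqP ji]; case: eqP => [->//|/eqP jm].
  by rewrite h3.
move=> ->; rewrite !ffunE !eqxx [m == i]eq_sym (negbTE im) !eqxx /=.
by apply/off2bP => j ji jm; rewrite ffunE (negbTE ji) (negbTE jm).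
Qed.

Lemma perm_mul_emb (i m l : 'I_n) (G : 'I_N -> 'I_N -> A) a b : i != m ->
  opmul (@permop A N n i m) (emb l G) a b =
  G (sw i m a l) (b l) * (offb l (sw i m a) b)%:R.
Proof.
move=> im; rewrite /opmul (@sum_single1 _ (sw i m a)).
  by rewrite permopE perm_swP // eqxx mul1r embE.
by move=> c cc0; rewrite permopE perm_swP // (negbTE cc0) mul0r.
Qed.

Lemma emb_mul_perm (i m l : 'I_n) (G : 'I_N -> 'I_N -> A) a b : i != m ->
  opmul (emb l G) (@permop A N n i m) a b =
  G (a l) (sw i m b l) * (offb l a (sw i m b))%:R.
Proof.
move=> im; rewrite /opmul (@sum_single1 _ (sw i m b)).
  by rewrite permopE perm_swP' // eqxx mulr1 embE.
by move=> c cc0; rewrite permopE perm_swP' // (negbTE cc0) mulr0.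
Qed.

End Entries.

Section Gens.
Variables (A : pzRingType) (N n : nat) (X D : 'I_N -> 'I_N -> A).
Hypothesis W : weyl_rel X D.
Local Notation I := {ffun 'I_n -> 'I_N}.
Local Notation OP := (op A N n).

Lemma Phi_ext (F G : OP) : (forall a b, F a b = G a b) -> Phi F = Phi G.
Proof. by move=> H; apply/matrixP => i j; rewrite !mxE H. Qed.

Lemma Phi_ext3 (F G H : OP) : (forall a b, F a b = G a b + H a b) ->
  Phi F = Phi G + Phi H.
Proof. by move=> E; apply/matrixP => i j; rewrite !mxE E. Qed.

Lemma off2bC (k l : 'I_n) (a b : I) : off2b k l a b = off2b l k a b.
Proof. by apply: eq_forallb => j; rewrite andbC. Qed.

Lemma off_sw1 (i m l : 'I_n) (a b : I) : l != i -> l != m -> i != m ->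
  offb l (sw i m a) b = offb l a (sw i m b).
Proof.
move=> li lm im.
have il : i != l by rewrite eq_sym.
have ml : m != l by rewrite eq_sym.
have mi : m != i by rewrite eq_sym.
apply/offbP/offbP => H j jl; rewrite !ffunE.
- have := H i il; have := H m ml; rewrite !ffunE eqxx (negbTE mi) eqxx => Hm Hi.
  case: ifP => [/eqP->//|/negbT ji]; case: ifP => [/eqP->//|/negbT jm].
  by have := H j jl; rewrite ffunE (negbTE ji) (negbTE jm).
- have := H i il; have := H m ml; rewrite !ffunE eqxx (negbTE mi) eqxx => Hm Hi.
  case: ifP => [/eqP->//|/negbT ji]; case: ifP => [/eqP->//|/negbT jm].
  by have := H j jl; rewrite ffunE (negbTE ji) (negbTE jm).
Qed.

Lemma off_sw2 (i m : 'I_n) (a b : I) : i != m ->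
  offb m (sw i m a) b = offb i a (sw i m b).
Proof.
move=> im; have mi : m != i by rewrite eq_sym.
apply/offbP/offbP => H j jl; rewrite !ffunE.
- have := H i im; rewrite !ffunE eqxx => Hi.
  rewrite (negbTE jl); case: ifP => [/eqP->//|/negbT jm].
  by have := H j jm; rewrite ffunE (negbTE jl) (negbTE jm).
- have := H m mi; rewrite !ffunE (negbTE mi) eqxx /= => Hm.
  case: ifP => [/eqP->|/negbT ji]; first exact: Hm.
  rewrite (negbTE jl).
  by have := H j ji; rewrite ffunE (negbTE ji) (negbTE jl).
Qed.

Lemma GL (m : 'I_n) :
  Phi (emb m (Lmat X D)) = Phi (@emb A N n m X) * Phi (@emb A N n m D).
Proof. by rewrite -Phi_mul; apply: Phi_ext => a b; rewrite emb_mul_eq embE. Qed.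

Lemma GDX (k m : 'I_n) : k != m ->
  Phi (@emb A N n k D) * Phi (@emb A N n m X) =
  Phi (@emb A N n m X) * Phi (@emb A N n k D) + Phi (@permop A N n k m).
Proof.
move=> km; rewrite -!Phi_mul; apply: Phi_ext3 => a b.
have mk : m != k by rewrite eq_sym.
case: W => _ _ W3.
rewrite !emb_mul_ne // permopE W3 (off2bC m k) mulrDl !b2R.
by case: (a k == b m); case: (a m == b k); case: (off2b k m a b);
  rewrite /= ?mulr1 ?mulr0 ?addr0 ?mul0r ?mul1r.
Qed.

Lemma GDD (k l : 'I_n) :
  Phi (@emb A N n k D) * Phi (@emb A N n l D) =
  Phi (@emb A N n l D) * Phi (@emb A N n k D).
Proof.
case: (eqVneq k l) => [->//|kl].
have lk : l != k by rewrite eq_sym.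
rewrite -!Phi_mul; apply: Phi_ext => a b.
case: W => _ W2 _.
by rewrite !emb_mul_ne // W2 (off2bC l k).
Qed.

Lemma GPD (i m l : 'I_n) : l != i -> l != m -> i != m ->
  Phi (@permop A N n i m) * Phi (@emb A N n l D) =
  Phi (@emb A N n l D) * Phi (@permop A N n i m).
Proof.
move=> li lm im; rewrite -!Phi_mul; apply: Phi_ext => a b.
rewrite perm_mul_emb // emb_mul_perm // off_sw1 // !ffunE (negbTE li) (negbTE lm).
by [].
Qed.

Lemma GPDm (i m : 'I_n) : i != m ->
  Phi (@permop A N n i m) * Phi (@emb A N n m D) =
  Phi (@emb A N n i D) * Phi (@permop A N n i m).
Proof.
move=> im; rewrite -!Phi_mul; apply: Phi_ext => a b.
rewrite perm_mul_emb // emb_mul_perm // off_sw2 // !ffunE eqxx.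
by rewrite eq_sym (negbTE im) eqxx.
Qed.
End Gens.
Unset Implicit Arguments.
Section Alg.
Variables (R : pzRingType) (n : nat) (x d L : nat -> R) (p : nat -> nat -> R).
Hypothesis HL : forall m, (m < n)%N -> L m = x m * d m.
Hypothesis HDX : forall k m, (k < n)%N -> (m < n)%N -> k != m ->
  d k * x m = x m * d k + p k m.
Hypothesis HDD : forall k l, (k < n)%N -> (l < n)%N -> d k * d l = d l * d k.
Hypothesis HPD : forall i m l, (i < n)%N -> (m < n)%N -> (l < n)%N ->
  l != i -> l != m -> i != m -> p i m * d l = d l * p i m.
Hypothesis HPDm : forall i m, (i < n)%N -> (m < n)%N -> i != m ->
  p i m * d m = d i * p i m.

Definition Dp t := \prod_(0 <= k < t) d k.
Definition Xp t := \prod_(0 <= k < t) x k.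
Definition Sm t m := \sum_(0 <= i < t) p i m.

Lemma Dp_rec t : Dp t.+1 = Dp t * d t.
Proof. by rewrite /Dp big_nat_recr. Qed.
Lemma Xp_rec t : Xp t.+1 = Xp t * x t.
Proof. by rewrite /Xp big_nat_recr. Qed.
Lemma Sm_rec t m : Sm t.+1 m = Sm t m + p t m.
Proof. by rewrite /Sm big_nat_recr. Qed.

Lemma S_comm t m : (t < m)%N -> (m < n)%N -> Sm t m * d t = d t * Sm t m.
Proof.
move=> tm mn; rewrite /Sm mulr_suml mulr_sumr.
apply: eq_big_nat => i /andP [_ it].
apply: HPD; rewrite ?(ltn_trans it) ?(ltn_trans tm) //.
- by rewrite gtn_eqF.
- by rewrite ltn_eqF.
- by rewrite ltn_eqF // (ltn_trans it).
Qed.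

Lemma step1 m t : (m < n)%N -> (t <= m)%N ->
  Dp t * x m * d m = x m * Dp t * d m + Dp t * Sm t m.
Proof.
move=> mn; elim: t => [|t IH] Htm.
  by rewrite /Dp /Sm !big_geq // mulr1 mul1r mulr0 addr0.
have tm : (t < m)%N by [].
have tn : (t < n)%N by apply: ltn_trans tm mn.
have tnm : t != m by rewrite ltn_eqF.
rewrite Dp_rec Sm_rec.
rewrite -(mulrA (Dp t) (d t) (x m)) (HDX t m) // mulrDr mulrDl.
rewrite (mulrA (Dp t) (x m) (d t)) -(mulrA (Dp t * x m) (d t) (d m)) (HDD t m) //.
rewrite (mulrA (Dp t * x m) (d m) (d t)) (IH (ltnW tm)).
rewrite -(mulrA (Dp t) (p t m) (d m)) (HPDm t m) // (mulrA (Dp t) (d t)) mulrDl.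
rewrite -(mulrA (x m * Dp t) (d m) (d t)) -(HDD t m) // (mulrA (x m * Dp t) (d t)).
rewrite -(mulrA (Dp t) (Sm t m) (d t)) (@S_comm t m tm mn) (mulrA (Dp t) (d t)).
by rewrite mulrDr !mulrA addrA.
Qed.

Lemma main_alg m : (m <= n)%N ->
  \prod_(0 <= k < m) (L k - Sm k k) = Xp m * Dp m.
Proof.
elim: m => [|m IH] mn.
  by rewrite /Xp /Dp !big_geq // mulr1.
have mn' : (m < n)%N by [].
rewrite big_nat_recr //= (IH (ltnW mn')) Xp_rec Dp_rec.
rewrite (HL m mn') mulrBr.
rewrite (mulrA (Xp m * Dp m) (x m) (d m)) -(mulrA (Xp m) (Dp m) (x m)).
rewrite -(mulrA (Xp m) (Dp m * x m) (d m)) (@step1 m m mn' (leqnn m)).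
rewrite mulrDr -(mulrA (Xp m) (Dp m) (Sm m m)) addrK.
by rewrite !mulrA.
Qed.

End Alg.

Lemma prod_enum_nat (R : pzRingType) n' (F : 'I_n'.+1 -> R) :
  \prod_(k <- enum 'I_n'.+1) F k = \prod_(0 <= k < n'.+1) F (inord k).
Proof.
transitivity (\prod_(k <- enum 'I_n'.+1) F (inord (val k))).
  by apply: eq_bigr => k _; rewrite inord_val.
by rewrite -(big_map val xpredT (fun j => F (inord j))) val_enum_ord /index_iota subn0.
Qed.

Lemma inord_neq n' (k m : nat) : (k < n'.+1)%N -> (m < n'.+1)%N -> k != m ->
  (inord k : 'I_n'.+1) != inord m.
Proof. by move=> kn mn km; rewrite -val_eqE /= !inordK. Qed.

Lemma sum_widen (R : nmodType) (F : nat -> R) k n : (k <= n)%N ->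
  \sum_(0 <= i < n | (i < k)%N) F i = \sum_(0 <= i < k) F i.
Proof.
move=> kn; rewrite (big_nat_widen 0 k n xpredT) //.
Qed.

Lemma jsum (A : pzRingType) N n' (k : nat) : (k < n'.+1)%N ->
  \sum_(i < n'.+1 | (i < (inord k : 'I_n'.+1))%N) Phi (@permop A N n'.+1 i (inord k)) =
  \sum_(0 <= i < k) Phi (@permop A N n'.+1 (inord i) (inord k)).
Proof.
move=> kn.
rewrite -(@sum_widen _ (fun i => Phi (@permop A N n'.+1 (inord i) (inord k))) k n'.+1 (ltnW kn)).
rewrite big_mkord.
apply: eq_big => [i|i _]; first by rewrite inordK.
by rewrite inord_val.
Qed.

Theorem mainTheorem2 (A : pzRingType) (N n : nat) (X D : 'I_N -> 'I_N -> A) :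
  weyl_rel X D -> (0 < n)%N ->
  forall a b : {ffun 'I_n -> 'I_N},
    opprod (enum 'I_n)
      (fun k => opsub (emb k (Lmat X D)) (@jmat A N n k)) a b =
    opmul (opprod (enum 'I_n) (fun k => emb k X))
          (opprod (enum 'I_n) (fun k => emb k D)) a b.
Proof.
move=> HW; case: n => [//|n'] _ a b.
set F1 := opprod _ _; set F2 := opmul _ _.
suff E : Phi F1 = Phi F2.
  by move/matrixP: E => /(_ (enum_rank a) (enum_rank b)); rewrite !mxE !enum_rankK.
rewrite /F1 /F2 Phi_mul !Phi_prod !prod_enum_nat.
pose x := fun k => Phi (@emb A N n'.+1 (inord k) X).
pose d := fun k => Phi (@emb A N n'.+1 (inord k) D).
pose L := fun k => Phi (@emb A N n'.+1 (inord k) (Lmat X D)).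
pose p := fun i k => Phi (@permop A N n'.+1 (inord i) (inord k)).
transitivity (\prod_(0 <= k < n'.+1) (L k - Sm _ p k k)).
  apply: eq_big_nat => k /andP [_ kn].
  by rewrite Phi_sub Phi_jmat jsum.
apply: (@main_alg _ n'.+1 x d L p _ _ _ _ _ n'.+1 (leqnn _)).
- by move=> m Hm; apply: GL.
- by move=> k m Hk Hm km; apply: (GDX HW); rewrite ?inord_neq.
- by move=> k l Hk Hl; apply: (GDD HW).
- by move=> i m l Hi Hm Hl li lm im; apply: GPD; rewrite inord_neq.
- by move=> i m Hi Hm im; apply: GPDm; rewrite ?inord_neq.
Qed.
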